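(* Let $H$ be a complex Hilbert space. Then: (1) if $\varphi_1,\varphi_2,\psi_1,\psi_2\in C[0,1]$ are real-valued, then for every $t\in[0,1]$, $$|n_t(\varphi_1,\psi_1;H)-n_t(\varphi_2,\psi_2;H)|\le|\varphi_1(t)-\varphi_2(t)|+|\psi_1(t)-\psi_2(t)|;$$ (2) if $\varphi,\psi,\varphi_n,\psi_n\in C[0,1]$ are real-valued and $\varphi_n\to\varphi$, $\psi_n\to\psi$ (pointwise on $[0,1]$), then for every $t\in[0,1]$, $n_t(\varphi,\psi;H)=\lim_{n\to\infty}n_t(\varphi_n,\psi_n;H)$.
   Context: $S_1(H)$ is the unit sphere of $H$; for real $\varphi,\psi$ on $[0,1]$, $\omega_t(\varphi,\psi;A)=\sup_{x\in S_1(H)}|\langle(\varphi(t)A+\psi(t)A^* )x,x\rangle|$, and the weighted numerical index is $n_t(\varphi,\psi;H)=\inf\{\omega_t(\varphi,\psi;A):A\in\mathbb{B}(H),\ \|A\|=1\}$. *)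

(* Defs.v *)
From HB Require Import structures.
From mathcomp Require Import all_boot all_order all_algebra.
From mathcomp Require Import complex.
From mathcomp Require Import all_classical all_reals all_analysis.
From Stdlib Require Import ClassicalEpsilon.
Set Implicit Arguments. Unset Strict Implicit. Unset Printing Implicit Defensive.
Import Order.TTheory GRing.Theory Num.Theory.
Local Open Scope ring_scope.

Section Hilbert.
Variables (R : realType) (H : lmodType R[i]) (ip : H -> H -> R[i]).

Definition cabs (z : R[i]) : R := complex.Re `|z|.

Definition hnorm (x : H) : R := Num.sqrt (complex.Re (ip x x)).

Definition is_complex_hilbert : Prop :=
  [/\ (forall (a : R[i]) (x y z : H), ip (a *: x + y) z = a * ip x z + ip y z),
      (forall x y : H, ip y x = ((ip x y)^*)%C),
      (forall x : H, 0 <= ip x x),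
      (forall x : H, ip x x = 0 -> x = 0) &
      (forall u : nat -> H,
         (forall e : R, 0 < e -> exists N : nat, forall m n : nat,
              (N <= m)%N -> (N <= n)%N -> hnorm (u m - u n) < e) ->
         exists l : H, forall e : R, 0 < e -> exists N : nat, forall n : nat,
              (N <= n)%N -> hnorm (u n - l) < e)].

Definition is_bounded_linear (A : H -> H) : Prop :=
  linear A /\ exists C : R, forall x : H, hnorm (A x) <= C * hnorm x.

Definition opnorm (A : H -> H) : R :=
  sup [set hnorm (A x) | x in [set x : H | hnorm x <= 1]].

Definition adjoint (A : H -> H) : H -> H :=
  epsilon (inhabits (fun x : H => x))
          (fun B : H -> H => forall x y : H, ip (A x) y = ip x (B y)).

Definition unit_sphere : set H := [set x : H | hnorm x = 1].

Definition omega_t (phi psi : R -> R) (t : R) (A : H -> H) : R :=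
  sup [set cabs (ip (((phi t)%:C)%C *: A x + ((psi t)%:C)%C *: adjoint A x) x)
      | x in unit_sphere].

Definition n_t (phi psi : R -> R) (t : R) : R :=
  inf [set omega_t phi psi t A
      | A in [set A : H -> H | is_bounded_linear A /\ opnorm A = 1]].

End Hilbert.

(* Main.v *)
Require Import Defs.
From HB Require Import structures.
From mathcomp Require Import all_boot all_order all_algebra.
From mathcomp Require Import complex.
From mathcomp Require Import all_classical all_reals all_analysis.
From Stdlib Require Import ClassicalEpsilon.
From mathcomp Require Import ring lra.
Import Order.TTheory GRing.Theory Num.Theory.
Import numFieldNormedType.Exports.
Set Implicit Arguments. Unset Strict Implicit. Unset Printing Implicit Defensive.
Local Open Scope ring_scope.
Local Open Scope classical_set_scope.

Lemma ceq (R : realType) (a b : R[i]) : complex.Re a = complex.Re b -> complex.Im a = complex.Im b -> a = b.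
Proof. by case: a => a1 a2; case: b => b1 b2 /= -> ->. Qed.

Lemma conjcM (R : realType) (a b : R[i]) : conjc (a * b) = conjc a * conjc b.
Proof. case: a => a1 a2; case: b => b1 b2; apply: ceq => /=; ring. Qed.
Lemma conjcD (R : realType) (a b : R[i]) : conjc (a + b) = conjc a + conjc b.
Proof. case: a => a1 a2; case: b => b1 b2; apply: ceq => /=; ring. Qed.
Lemma ReM (R : realType) (a b : R[i]) : complex.Re (a * b) = complex.Re a * complex.Re b - complex.Im a * complex.Im b.
Proof. by case: a => a1 a2; case: b => b1 b2. Qed.
Lemma ImM (R : realType) (a b : R[i]) : complex.Im (a * b) = complex.Re a * complex.Im b + complex.Im a * complex.Re b.
Proof. by case: a => a1 a2; case: b => b1 b2. Qed.
Lemma ReD (R : realType) (a b : R[i]) : complex.Re (a + b) = complex.Re a + complex.Re b.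
Proof. by case: a => a1 a2; case: b => b1 b2. Qed.
Lemma ImD (R : realType) (a b : R[i]) : complex.Im (a + b) = complex.Im a + complex.Im b.
Proof. by case: a => a1 a2; case: b => b1 b2. Qed.
Lemma ReN (R : realType) (a : R[i]) : complex.Re (- a) = - complex.Re a.
Proof. by case: a. Qed.
Lemma ImN (R : realType) (a : R[i]) : complex.Im (- a) = - complex.Im a.
Proof. by case: a. Qed.
Lemma ReJ (R : realType) (a : R[i]) : complex.Re (conjc a) = complex.Re a.
Proof. by case: a. Qed.
Lemma ImJ (R : realType) (a : R[i]) : complex.Im (conjc a) = - complex.Im a.
Proof. by case: a. Qed.
Lemma ReC (R : realType) (r : R) : complex.Re (r%:C)%C = r.
Proof. by []. Qed.
Lemma ImC (R : realType) (r : R) : complex.Im (r%:C)%C = 0.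
Proof. by []. Qed.
Lemma Rei (R : realType) : complex.Re ('i%C : R[i]) = 0. Proof. by []. Qed.
Lemma Imi (R : realType) : complex.Im ('i%C : R[i]) = 1. Proof. by []. Qed.
Lemma Re0 (R : realType) : complex.Re (0 : R[i]) = 0. Proof. by []. Qed.
Lemma Im0 (R : realType) : complex.Im (0 : R[i]) = 0. Proof. by []. Qed.
Lemma Re1 (R : realType) : complex.Re (1 : R[i]) = 1. Proof. by []. Qed.
Lemma Im1 (R : realType) : complex.Im (1 : R[i]) = 0. Proof. by []. Qed.

Definition CE := (ReM, ImM, ReD, ImD, ReN, ImN, ReJ, ImJ, ReC, ImC, Rei, Imi, Re0, Im0, Re1, Im1).


Lemma ip0l (R : realType) (H : lmodType R[i]) (ip : H -> H -> R[i])
  (hH : is_complex_hilbert ip) z : ip 0 z = 0.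
Proof.
case: hH => hl _ _ _ _; have h := hl 1 0 0 z.
rewrite scale1r addr0 mul1r in h.
by apply: (addrI (ip 0 z)); rewrite addr0 -h.
Qed.

Lemma ipZl (R : realType) (H : lmodType R[i]) (ip : H -> H -> R[i])
  (hH : is_complex_hilbert ip) a x z : ip (a *: x) z = a * ip x z.
Proof.
have h0 := ip0l hH z; case: hH => hl _ _ _ _.
by rewrite -[a *: x]addr0 hl h0 addr0.
Qed.

Lemma ipDl (R : realType) (H : lmodType R[i]) (ip : H -> H -> R[i])
  (hH : is_complex_hilbert ip) x y z : ip (x + y) z = ip x z + ip y z.
Proof. by case: hH => hl _ _ _ _; rewrite -[x]scale1r hl mul1r scale1r. Qed.

Lemma ipNl (R : realType) (H : lmodType R[i]) (ip : H -> H -> R[i])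
  (hH : is_complex_hilbert ip) x z : ip (- x) z = - ip x z.
Proof. by rewrite -scaleN1r (ipZl hH) mulN1r. Qed.

Lemma ipZr (R : realType) (H : lmodType R[i]) (ip : H -> H -> R[i])
  (hH : is_complex_hilbert ip) a x z : ip z (a *: x) = conjc a * ip z x.
Proof.
have hs : forall x y, ip y x = conjc (ip x y) by case: hH.
by rewrite hs (ipZl hH) conjcM -hs.
Qed.

Lemma ipDr (R : realType) (H : lmodType R[i]) (ip : H -> H -> R[i])
  (hH : is_complex_hilbert ip) x y z : ip z (x + y) = ip z x + ip z y.
Proof.
have hs : forall x y, ip y x = conjc (ip x y) by case: hH.
by rewrite hs (ipDl hH) conjcD -!hs.
Qed.

Lemma ipNr (R : realType) (H : lmodType R[i]) (ip : H -> H -> R[i])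
  (hH : is_complex_hilbert ip) x z : ip z (- x) = - ip z x.
Proof.
have hs : forall x y, ip y x = conjc (ip x y) by case: hH.
by rewrite hs (ipNl hH) [ip z x]hs; apply: ceq; rewrite !CE.
Qed.

Lemma ipxx (R : realType) (H : lmodType R[i]) (ip : H -> H -> R[i])
  (hH : is_complex_hilbert ip) x : ip x x = ((complex.Re (ip x x))%:C)%C.
Proof.
case: hH => _ _ hp _ _; have := hp x; move: (ip x x) => c.
by rewrite lecE => /andP[/eqP h _]; apply: ceq => //=; rewrite -h.
Qed.

Lemma q_ge0 (R : realType) (H : lmodType R[i]) (ip : H -> H -> R[i])
  (hH : is_complex_hilbert ip) x : 0 <= complex.Re (ip x x).
Proof. by case: hH => _ _ hp _ _; have := hp x; rewrite lecE => /andP[_]. Qed.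

Lemma cabsE (R : realType) (z : R[i]) :
  cabs z = Num.sqrt (complex.Re z ^+ 2 + complex.Im z ^+ 2).
Proof. by rewrite /cabs normc_def. Qed.

Lemma ip_expand (R : realType) (H : lmodType R[i]) (ip : H -> H -> R[i])
  (hH : is_complex_hilbert ip) x y c :
  ip (x - c *: y) (x - c *: y) =
  ip x x - conjc c * ip x y - c * ip y x + c * conjc c * ip y y.
Proof.
rewrite (ipDl hH) !(ipDr hH) !(ipNl hH) !(ipNr hH) !(ipZl hH) !(ipZr hH).
ring.
Qed.

Lemma CS (R : realType) (H : lmodType R[i]) (ip : H -> H -> R[i])
  (hH : is_complex_hilbert ip) x y : cabs (ip x y) <= hnorm ip x * hnorm ip y.
Proof.
have hs : forall x y, ip y x = conjc (ip x y) by case: hH.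
have hd : forall x, ip x x = 0 -> x = 0 by case: hH.
rewrite /hnorm cabsE -sqrtrM ?(q_ge0 hH) //; rewrite ler_sqrt; last by apply: mulr_ge0; apply: (q_ge0 hH).
set z := ip x y; set n := _ + _.
have qx0 := q_ge0 hH x; have qy0 := q_ge0 hH y.
have n0 : 0 <= n by rewrite /n; apply: addr_ge0; apply: sqr_ge0.
have [qy_eq0|qy_gt0] := eqVneq (complex.Re (ip y y)) 0.
  have y0 : y = 0 by apply: hd; rewrite (ipxx hH) qy_eq0.
  have : z = 0 by rewrite /z y0 hs (ip0l hH); apply: ceq => //=; rewrite oppr0.
  by move=> z0; rewrite /n z0 !CE expr0n /= addr0; apply: mulr_ge0.
have qyp : 0 < complex.Re (ip y y) by rewrite lt_def qy_gt0 qy0.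
have := q_ge0 hH ((complex.Re (ip y y))%:C%C *: x - z *: y).
rewrite (ip_expand hH) !(ipZl hH) !(ipZr hH) -/z (hs x y) -/z (ipxx hH x) (ipxx hH y) !CE.
move: qyp qx0 n0; rewrite /n; move: (complex.Re (ip x x)) (complex.Re (ip y y)).
move: (complex.Re z) (complex.Im z) => a b X Y qyp qx0 n0 h.
nra.
Qed.

Lemma arch (R : realType) (eps : R) : 0 < eps ->
  exists N : nat, forall n, (N <= n)%N -> (n.+1%:R)^-1 < eps.
Proof.
move=> e0; exists (Num.truncn (eps^-1)) => n hn.
rewrite invf_plt ?posrE ?ltr0Sn //; apply: (lt_le_trans (truncnS_gt (eps^-1))).
by rewrite ler_nat ltnS.
Qed.

Lemma Re_le_cabs (R : realType) (z : R[i]) : complex.Re z <= cabs z.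
Proof.
rewrite cabsE; apply: (le_trans (ler_norm _)).
rewrite -sqrtr_sqr ler_sqrt; last by apply: addr_ge0; apply: sqr_ge0.
by rewrite lerDl sqr_ge0.
Qed.

Lemma hnorm_sqr (R : realType) (H : lmodType R[i]) (ip : H -> H -> R[i])
  (hH : is_complex_hilbert ip) x : hnorm ip x ^+ 2 = complex.Re (ip x x).
Proof. by rewrite /hnorm sqr_sqrtr // (q_ge0 hH). Qed.

Lemma hnorm_ge0 (R : realType) (H : lmodType R[i]) (ip : H -> H -> R[i]) x :
  0 <= hnorm ip x.
Proof. exact: sqrtr_ge0. Qed.

Lemma q_sub (R : realType) (H : lmodType R[i]) (ip : H -> H -> R[i])
  (hH : is_complex_hilbert ip) x y (t : R) :
  complex.Re (ip (x - (t%:C)%C *: y) (x - (t%:C)%C *: y)) =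
  complex.Re (ip x x) - 2 * t * complex.Re (ip x y) + t ^+ 2 * complex.Re (ip y y).
Proof.
have hs : forall x y, ip y x = conjc (ip x y) by case: hH.
rewrite (ip_expand hH) (hs x y) (ipxx hH y) !CE.
move: (complex.Re (ip x y)) (complex.Im (ip x y)) => a b; ring.
Qed.

Lemma q_add (R : realType) (H : lmodType R[i]) (ip : H -> H -> R[i])
  (hH : is_complex_hilbert ip) x y :
  complex.Re (ip (x + y) (x + y)) =
  complex.Re (ip x x) + 2 * complex.Re (ip x y) + complex.Re (ip y y).
Proof.
have hs : forall x y, ip y x = conjc (ip x y) by case: hH.
have -> : x + y = x - ((-1)%:C)%C *: y.
  by rewrite -scaleNr; congr (_ + _); rewrite -[in LHS](scale1r y); congr (_ *: _); apply: ceq; rewrite !CE ?opprK ?oppr0.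
rewrite (q_sub hH); ring.
Qed.

Lemma q_scale (R : realType) (H : lmodType R[i]) (ip : H -> H -> R[i])
  (hH : is_complex_hilbert ip) x (t : R) :
  complex.Re (ip ((t%:C)%C *: x) ((t%:C)%C *: x)) = t ^+ 2 * complex.Re (ip x x).
Proof.
rewrite (ipZl hH) (ipZr hH) (ipxx hH x) !CE.
by rewrite /=; ring.
Qed.

Lemma normRe_le_cabs (R : realType) (z : R[i]) : `|complex.Re z| <= cabs z.
Proof.
rewrite cabsE -sqrtr_sqr ler_sqrt; last by apply: addr_ge0; apply: sqr_ge0.
by rewrite lerDl sqr_ge0.
Qed.

Lemma sub_scale1 (R : realType) (H : lmodType R[i]) (x y : H) :
  x - y = x - ((1%:C)%C : R[i]) *: y.
Proof. have -> : ((1%:C)%C : R[i]) = 1 by apply: ceq. by rewrite scale1r. Qed.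

Lemma riesz (R : realType) (H : lmodType R[i]) (ip : H -> H -> R[i])
  (hH : is_complex_hilbert ip) (f : H -> R[i])
  (fZ : forall a x, f (a *: x) = a * f x)
  (fD : forall x y, f (x + y) = f x + f y)
  (K : R) (fK : forall x, cabs (f x) <= K * hnorm ip x) :
  exists l, forall w, f w = ip w l.
Proof.
have hs : forall x y, ip y x = conjc (ip x y) by case: hH.
have hc := (let: And5 _ _ _ _ hc := hH in hc).
have fN : forall x, f (- x) = - f x by move=> x; rewrite -scaleN1r fZ mulN1r.
have fB : forall x y, f (x - y) = f x - f y by move=> x y; rewrite fD fN.
pose q x := complex.Re (ip x x).
pose J x := q x / 2 - complex.Re (f x).
have fRe : forall x, complex.Re (f x) <= `|K| * hnorm ip x.
  move=> x; apply: (le_trans (Re_le_cabs _)); apply: (le_trans (fK x)).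
  by apply: ler_wpM2r; [apply: hnorm_ge0 | apply: ler_norm].
have Jlb : forall x, - (`|K| ^+ 2) / 2 <= J x.
  move=> x; have := fRe x; rewrite /J /q -(hnorm_sqr hH).
  have := hnorm_ge0 ip x; have := normr_ge0 K.
  move: (hnorm ip x) `|K| (complex.Re (f x)) => s k r h1 h2 h3; have := sqr_ge0 (s - k); nra.
pose E := range J.
have Ene : E !=set0 by exists (J 0), 0.
have Elb : has_lbound E by exists (- (`|K| ^+ 2) / 2) => _ [x _ <-].
have hinf : has_inf E by split.
set m := inf E.
have Jm : forall x, m <= J x by move=> x; apply: ge_inf => //; exists x.
have : forall n : nat, exists x, J x < m + (n.+1%:R)^-1.
  move=> n; have hp : 0 < (n.+1%:R : R)^-1 by rewrite invr_gt0 ltr0Sn.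
  have [_ [x _ <-] hx] := inf_adherent hp hinf.
  by exists x.
move=> /choice [u hu].
have par : forall x y, q (x - y) = 2 * q x + 2 * q y - q (x + y).
  by move=> x y; rewrite /q sub_scale1 (q_sub hH) (q_add hH); ring.
have cauchy : forall i j, q (u i - u j) <= 4 * (i.+1%:R)^-1 + 4 * (j.+1%:R)^-1.
  move=> i j; set v := ((2^-1)%:C)%C *: (u i + u j).
  have := Jm v; have := hu i; have := hu j; rewrite /J par /v /q (q_scale hH).
  rewrite fZ fD !CE /q.
  move: ((i.+1%:R : R)^-1) ((j.+1%:R : R)^-1) => a b; rewrite expr2; lra.
have [l hl] : exists l, forall e, 0 < e -> exists N, forall n, (N <= n)%N -> hnorm ip (u n - l) < e.
  apply: hc => e e0.
  have e2 : 0 < e ^+ 2 / 8 by apply: divr_gt0; [apply: exprn_gt0 | ].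
  have [N hN] := arch e2; exists N => i j hi hj.
  have h1 := hN _ hi; have h2 := hN _ hj; have h3 := cauchy i j.
  rewrite /hnorm -(gtr0_norm e0) -sqrtr_sqr ltr_sqrt; last by apply: exprn_gt0.
  move: h1 h2 h3; rewrite /q; move: ((i.+1%:R : R)^-1) ((j.+1%:R : R)^-1) => a b; lra.
have key : forall w, complex.Re (ip l w) = complex.Re (f w).
  move=> w.
  set a := complex.Re (ip l w) - complex.Re (f w).
  set c2 := q w / 2.
  have hw0 := hnorm_ge0 ip w.
  have var : forall (t : R) n, - (n.+1%:R)^-1 - `|t| * hnorm ip (u n - l) * hnorm ip w < - t * a + t ^+ 2 * c2.
    move=> t n.
    have h1 := Jm (u n - (t%:C)%C *: w).
    have h2 := hu n.
    have hd : complex.Re (ip (u n) w) = complex.Re (ip l w) + complex.Re (ip (u n - l) w).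
      by rewrite -ReD -(ipDl hH) addrC subrK.
    have hb : `|complex.Re (ip (u n - l) w)| <= hnorm ip (u n - l) * hnorm ip w.
      exact: le_trans (normRe_le_cabs _) (CS hH _ _).
    have ht : - (t * complex.Re (ip (u n - l) w)) <= `|t| * (hnorm ip (u n - l) * hnorm ip w).
      rewrite -mulrN; apply: le_trans (ler_norm _) _; rewrite normrM normrN; apply: ler_wpM2l => //.
    rewrite mulrA in ht.
    move: h1 h2 ht; rewrite /J /q (q_sub hH) fB fZ !CE hd /a /c2 /q.
    move: ((n.+1%:R : R)^-1) => iv.
    move: (complex.Re (ip (u n - l) w)) (`|t| * hnorm ip (u n - l) * hnorm ip w) => d P.
    move=> h1 h2 h3; nra.
  have g0 : forall t : R, 0 <= - t * a + t ^+ 2 * c2.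
    move=> t; rewrite leNgt; apply/negP => hg.
    move: (var t) hg; move: (- t * a + t ^+ 2 * c2) => g hv hg.
    pose D := `|t| * hnorm ip w + 1.
    have D0 : 0 < D by rewrite /D ltr_wpDl // mulr_ge0.
    have ep2 : 0 < - g / 2 by lra.
    have ep : 0 < (- g / 2) / D by apply: divr_gt0.
    have [N1 hN1] := hl _ ep.
    have [N2 hN2] := arch ep2.
    have := hv (maxn N1 N2).
    have h1 := hN1 (maxn N1 N2) (leq_maxl _ _).
    have h2 := hN2 (maxn N1 N2) (leq_maxr _ _).
    move: h1 h2; rewrite ltr_pdivlMr //.
    have hn0 := hnorm_ge0 ip (u (maxn N1 N2) - l).
    move: hn0; rewrite /D.
    move: (hnorm ip (u (maxn N1 N2) - l)) ((maxn N1 N2).+1%:R^-1) => hn iv.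
    move: (`|t|) (normr_ge0 t) => ta ta0 hn0 h1 h2 h3.
    nra.
  have c20 : 0 <= c2 by rewrite /c2 /q; apply: divr_ge0 => //; exact: q_ge0 hH w.
  set s := (c2 + 1)^-1.
  have s0 : 0 < s by rewrite invr_gt0; lra.
  have hs1 : s * c2 = 1 - s by rewrite /s; field; lra.
  have := g0 (s * a).
  have -> : (s * a) ^+ 2 * c2 = s * a * a * (s * c2) by ring.
  rewrite hs1 => h.
  have sa0 : s * a = 0 by nra.
  move: sa0 => /eqP; rewrite mulf_eq0 => /orP[/eqP s00|/eqP a0]; first by lra.
  by move: a0; rewrite /a; lra.
exists l => w; apply: ceq.
  by rewrite hs ReJ key.
have := key ('i%C *: w); rewrite (ipZr hH) fZ !CE hs ImJ.
rewrite ?ReJ !mul0r; lra.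
Qed.

Lemma cabs_normc (R : realType) (z : R[i]) : cabs z = Normc.normc z.
Proof. by rewrite cabsE; case: z. Qed.

Lemma cabsD (R : realType) (z w : R[i]) : cabs (z + w) <= cabs z + cabs w.
Proof. by rewrite !cabs_normc; apply: le_normcD. Qed.
Lemma cabsM (R : realType) (z w : R[i]) : cabs (z * w) = cabs z * cabs w.
Proof. by rewrite !cabs_normc; apply: Normc.normcM. Qed.
Lemma cabsN (R : realType) (z : R[i]) : cabs (- z) = cabs z.
Proof. by rewrite !cabs_normc; apply: normcN. Qed.
Lemma cabsR (R : realType) (r : R) : cabs ((r%:C)%C) = `|r|.
Proof. by rewrite cabsE !CE expr0n /= addr0 sqrtr_sqr. Qed.
Lemma cabsJ (R : realType) (z : R[i]) : cabs (conjc z) = cabs z.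
Proof. by rewrite !cabsE ReJ ImJ sqrrN. Qed.
Lemma cabs_ge0 (R : realType) (z : R[i]) : 0 <= cabs z.
Proof. by rewrite cabsE sqrtr_ge0. Qed.

Lemma lin_props (R : realType) (H : lmodType R[i]) (A : H -> H) : linear A ->
  (forall a x, A (a *: x) = a *: A x) /\ (forall x y, A (x + y) = A x + A y).
Proof.
move=> lin.
have A0 : A 0 = 0.
  have h := lin 1 0 0; rewrite !scale1r addr0 in h.
  by apply: (addrI (A 0)); rewrite addr0 -h.
split; first by move=> a x; rewrite -[a *: x]addr0 lin A0 addr0.
by move=> x y; have := lin 1 x y; rewrite !scale1r.
Qed.

Lemma adjoint_spec (R : realType) (H : lmodType R[i]) (ip : H -> H -> R[i])
  (hH : is_complex_hilbert ip) (A : H -> H) : is_bounded_linear ip A ->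
  forall x y, ip (A x) y = ip x (adjoint ip A y).
Proof.
case=> /lin_props [AZ AD] [C hC].
have ex : exists B : H -> H, forall x y, ip (A x) y = ip x (B y).
  have : forall y, exists l, forall w, ip (A w) y = ip w l.
    move=> y; apply: (@riesz _ _ _ hH (fun w => ip (A w) y) _ _ (`|C| * hnorm ip y)).
    - by move=> a x; rewrite AZ (ipZl hH).
    - by move=> x z; rewrite AD (ipDl hH).
    - move=> x; apply: (le_trans (CS hH _ _)).
      rewrite mulrAC; apply: ler_wpM2r; first exact: hnorm_ge0.
      apply: (le_trans (hC x)); apply: ler_wpM2r; [exact: hnorm_ge0 | exact: ler_norm].
  by move/choice => [B hB]; exists B.
rewrite /adjoint; move: ex; exact: epsilon_spec.
Qed.

Lemma image_empty (T : Type) (R : realType) (D : set T) (f : T -> R) :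
  ~ (D !=set0) -> f @` D = set0.
Proof.
move=> hne; apply/seteqP; split => // y [x Dx _]; apply: hne; by exists x.
Qed.

Lemma sup_bnd (T : Type) (R : realType) (D : set T) (f : T -> R) (M : R) :
  0 <= M -> (forall x, D x -> 0 <= f x <= M) -> 0 <= sup (f @` D) <= M.
Proof.
move=> M0 hf; have [[x0 Dx0]|hne] := pselect (D !=set0); last first.
  by rewrite image_empty // sup0 lexx.
have hs : has_sup (f @` D).
  by split; [exists (f x0), x0 | exists M => _ [x Dx <-]; have /andP[] := hf x Dx].
apply/andP; split.
  have /andP[h0 _] := hf x0 Dx0; apply: (le_trans h0).
  by apply: sup_upper_bound => //; exists x0.
apply: ge_sup; first by exists (f x0), x0.
by move=> _ [x Dx <-]; have /andP[] := hf x Dx.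
Qed.

Lemma sup_lip (T : Type) (R : realType) (D : set T) (f g : T -> R) (M d : R) :
  0 <= d -> (forall x, D x -> f x <= M /\ g x <= M) ->
  (forall x, D x -> `|f x - g x| <= d) ->
  `|sup (f @` D) - sup (g @` D)| <= d.
Proof.
move=> d0 hM hd; have [[x0 Dx0]|hne] := pselect (D !=set0); last first.
  by rewrite !image_empty // sup0 subrr normr0.
have hsf : has_sup (f @` D).
  by split; [exists (f x0), x0 | exists M => _ [x Dx <-]; have [] := hM x Dx].
have hsg : has_sup (g @` D).
  by split; [exists (g x0), x0 | exists M => _ [x Dx <-]; have [] := hM x Dx].
have h1 : sup (f @` D) <= sup (g @` D) + d.
  apply: ge_sup; first by exists (f x0), x0.
  move=> _ [x Dx <-]; have := hd x Dx; rewrite ler_norml => /andP[_ h].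
  have : g x <= sup (g @` D) by apply: sup_upper_bound => //; exists x.
  lra.
have h2 : sup (g @` D) <= sup (f @` D) + d.
  apply: ge_sup; first by exists (g x0), x0.
  move=> _ [x Dx <-]; have := hd x Dx; rewrite ler_norml => /andP[h _].
  have : f x <= sup (f @` D) by apply: sup_upper_bound => //; exists x.
  lra.
rewrite ler_norml; apply/andP; split; lra.
Qed.

Lemma lemC (R : realType) (p1 p2 : R) : ((p1 - p2)%:C)%C = (p1%:C)%C - (p2%:C)%C :> R[i].
Proof. by apply: ceq; rewrite !CE // subrr. Qed.

Lemma val_bnd (R : realType) (a b : R[i]) (p s : R) : cabs a <= 1 -> cabs b <= 1 ->
  0 <= cabs ((p%:C)%C * a + (s%:C)%C * b) <= `|p| + `|s|.
Proof.
move=> ha hb; rewrite cabs_ge0 /=; apply: (le_trans (cabsD _ _)).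
rewrite !cabsM !cabsR.
have := normr_ge0 p; have := normr_ge0 s; have := cabs_ge0 a; have := cabs_ge0 b.
move: (cabs a) (cabs b) `|p| `|s| ha hb => x y u v; nra.
Qed.

Lemma val_lip (R : realType) (a b : R[i]) (p1 p2 s1 s2 : R) : cabs a <= 1 -> cabs b <= 1 ->
  `|cabs ((p1%:C)%C * a + (s1%:C)%C * b) - cabs ((p2%:C)%C * a + (s2%:C)%C * b)|
    <= `|p1 - p2| + `|s1 - s2|.
Proof.
move=> ha hb.
set z1 := ((p1%:C)%C * a + (s1%:C)%C * b); set z2 := ((p2%:C)%C * a + (s2%:C)%C * b).
have ez : z1 - z2 = (((p1 - p2)%:C)%C * a + ((s1 - s2)%:C)%C * b) by rewrite !lemC /z1 /z2; ring.
have := val_bnd (p1 - p2) (s1 - s2) ha hb; rewrite -ez => /andP[_ hz].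
have h1 : cabs z1 <= cabs z2 + cabs (z1 - z2) by rewrite -{1}(subrK z2 z1) addrC; apply: cabsD.
have h2 : cabs z2 <= cabs z1 + cabs (z1 - z2).
  by rewrite -(cabsN (z1 - z2)) opprB -{1}(subrK z1 z2) addrC; apply: cabsD.
rewrite ler_norml; apply/andP; split; lra.
Qed.

Lemma core (R : realType) (H : lmodType R[i]) (ip : H -> H -> R[i])
  (hH : is_complex_hilbert ip) (phi1 phi2 psi1 psi2 : R -> R) (t : R) :
  `|n_t ip phi1 psi1 t - n_t ip phi2 psi2 t|
     <= `|phi1 t - phi2 t| + `|psi1 t - psi2 t|.
Proof.
have hs : forall x y, ip y x = conjc (ip x y) by case: hH.
set d := `|phi1 t - phi2 t| + `|psi1 t - psi2 t|.
have d0 : 0 <= d by apply: addr_ge0; apply: normr_ge0.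
pose SA := [set A : H -> H | is_bounded_linear ip A /\ opnorm ip A = 1].
have ptw : forall A, SA A -> forall x, unit_sphere ip x ->
   cabs (ip (A x) x) <= 1 /\ cabs (ip (adjoint ip A x) x) <= 1.
  move=> A; rewrite /SA /= => -[hb hn] x hx.
  have hAx : hnorm ip (A x) <= 1.
    case: (hb) => _ [C hC].
    rewrite -hn /opnorm; apply: sup_upper_bound; last by exists x => //; rewrite /= hx.
    split; first by exists (hnorm ip (A x)), x => //=; rewrite hx.
    exists `|C| => _ [y hy <-]; apply: (le_trans (hC y)).
    have := hnorm_ge0 ip y; move: hy; rewrite /=.
    have := ler_norm C; have := normr_ge0 C.
    move: (hnorm ip y) `|C| => u v; nra.
  have ha : cabs (ip (A x) x) <= 1.
    by apply: (le_trans (CS hH _ _)); rewrite hx mulr1.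
  split => //.
  by rewrite [ip (adjoint ip A x) x]hs -(adjoint_spec hH hb) cabsJ.
have val : forall (p s : R -> R) A x,
    cabs (ip (((p t)%:C)%C *: A x + ((s t)%:C)%C *: adjoint ip A x) x) =
    cabs (((p t)%:C)%C * ip (A x) x + ((s t)%:C)%C * ip (adjoint ip A x) x).
  by move=> p s A x; rewrite (ipDl hH) !(ipZl hH).
have wb : forall (p s : R -> R) A, SA A ->
    0 <= omega_t ip p s t A <= `|p t| + `|s t|.
  move=> p s A hA; rewrite /omega_t; apply: sup_bnd; first by apply: addr_ge0; apply: normr_ge0.
  move=> x hx; rewrite val; have [ha hb] := ptw A hA x hx; exact: val_bnd.
have wd : forall A, SA A -> `|omega_t ip phi1 psi1 t A - omega_t ip phi2 psi2 t A| <= d.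
  move=> A hA; rewrite /omega_t.
  apply: (sup_lip (M := (`|phi1 t| + `|psi1 t|) + (`|phi2 t| + `|psi2 t|))) => //.
    move=> x hx; rewrite !val; have [ha hb] := ptw A hA x hx.
    have /andP[_ h1] := val_bnd (phi1 t) (psi1 t) ha hb.
    have /andP[_ h2] := val_bnd (phi2 t) (psi2 t) ha hb.
    have := normr_ge0 (phi1 t); have := normr_ge0 (psi1 t).
    have := normr_ge0 (phi2 t); have := normr_ge0 (psi2 t).
    split; lra.
  move=> x hx; rewrite !val; have [ha hb] := ptw A hA x hx; exact: val_lip.
have E : forall X Y : R, `|- X - - Y| = `|X - Y|.
  by move=> X Y; rewrite -normrN; congr `|_|; ring.
rewrite /n_t /inf !image_comp E.
apply: (sup_lip (M := 0)) => //.
  move=> A hA; have /andP[h1 _] := wb phi1 psi1 A hA; have /andP[h2 _] := wb phi2 psi2 A hA.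
  by rewrite /= !oppr_le0.
by move=> A hA; rewrite /= E; apply: wd.
Qed.

Unset Implicit Arguments. Set Strict Implicit.

Theorem theorem4p8 (R : realType) (H : lmodType R[i]) (ip : H -> H -> R[i])
  (hH : is_complex_hilbert ip) :
  (forall phi1 phi2 psi1 psi2 : R -> R,
      {within `[0, 1], continuous phi1} -> {within `[0, 1], continuous phi2} ->
      {within `[0, 1], continuous psi1} -> {within `[0, 1], continuous psi2} ->
      forall t : R, t \in `[0, 1]%R ->
        `|n_t ip phi1 psi1 t - n_t ip phi2 psi2 t|
          <= `|phi1 t - phi2 t| + `|psi1 t - psi2 t|)
  /\
  (forall (phi psi : R -> R) (phin psin : nat -> R -> R),
      {within `[0, 1], continuous phi} -> {within `[0, 1], continuous psi} ->
      (forall n, {within `[0, 1], continuous phin n}) ->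
      (forall n, {within `[0, 1], continuous psin n}) ->
      (forall t : R, t \in `[0, 1]%R -> (fun n => phin n t) @ \oo --> phi t) ->
      (forall t : R, t \in `[0, 1]%R -> (fun n => psin n t) @ \oo --> psi t) ->
      forall t : R, t \in `[0, 1]%R ->
        (fun n => n_t ip (phin n) (psin n) t) @ \oo --> n_t ip phi psi t).
Proof.
split.
  by move=> phi1 phi2 psi1 psi2 _ _ _ _ t _; apply: core.
move=> phi psi phin psin _ _ _ _ hphi hpsi t ht.
apply/cvgrPdist_lt => e e0.
have e2 : 0 < e / 2 by apply: divr_gt0.
have h1 := (cvgrPdist_lt _ _).1 (hphi t ht) _ e2.
have h2 := (cvgrPdist_lt _ _).1 (hpsi t ht) _ e2.
near=> n.
have H1 : `|phi t - phin n t| < e / 2 by near: n; exact: h1.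
have H2 : `|psi t - psin n t| < e / 2 by near: n; exact: h2.
apply: (le_lt_trans (core hH phi (phin n) psi (psin n) t)).
lra.
Unshelve. all: by end_near.
Qed.
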